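(* Let $P$ be a finite lattice and $R,R'\in\mathrm{Tr}(P)$ with $\chi^R=\chi^{R'}$. Then $\chi^{R\wedge R'}=\chi^R=\chi^{R'}$, where $R\wedge R'$ is the meet (intersection of relations) in $\mathrm{Tr}(P)$.
   Context: For a finite lattice $(P,\le)$, a transfer system on $P$ is a partial order $R$ on $P$ refining $\le$ that is closed under restriction: if $x\,R\,z$ and $y\le z$ then $(x\wedge y)\,R\,y$. $\mathrm{Tr}(P)$ is the lattice of transfer systems ordered by inclusion of relations. For $R\in\mathrm{Tr}(P)$ and $x\in P$, $\chi^R(x)$ denotes the least element of $\{y\in P: y\,R\,x\}$ (which exists). *)

(* Defs.v *)
From mathcomp Require Import all_boot all_order.
Set Implicit Arguments. Unset Strict Implicit. Unset Printing Implicit Defensive.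
Import Order.Theory.
Local Open Scope order_scope.

Definition transfer_system d (P : finLatticeType d) (R : rel P) : Prop :=
  [/\ reflexive R, antisymmetric R, transitive R,
      (forall x y, R x y -> x <= y) &
      (forall x y z, R x z -> y <= z -> R (x `&` y) y)].

Definition tr_meet d (P : finLatticeType d) (R R' : rel P) : rel P :=
  fun x y => R x y && R' x y.

Definition is_chi d (P : finLatticeType d) (R : rel P) (x y : P) : Prop :=
  R y x /\ (forall z, R z x -> y <= z).

(* The least element exists (as stated in the paper), so chi^R is a function;
   we define it by choice on the (finite, decidable) least-element predicate. *)
Definition chi d (P : finLatticeType d) (R : rel P) (x : P) : P :=
  odflt x [pick y | R y x && [forall z, R z x ==> (y <= z)]].

(* Main.v *)
Require Import Defs.
From mathcomp Require Import all_boot all_order.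
Import Order.Theory.
Local Open Scope order_scope.

Lemma chi_eq d (P : finLatticeType d) (R : rel P) x c :
  R c x -> (forall z, R z x -> c <= z) -> chi R x = c.
Proof.
move=> Rc Hc; rewrite /chi; case: pickP => [y /andP[Ry /forallP Hy]|H] /=.
  apply: le_anti; rewrite Hc // andbT.
  by have := Hy c; rewrite Rc.
have := H c; rewrite Rc /=; move/negbT/negP; case.
by apply/forallP => z; apply/implyP => /Hc.
Qed.

Lemma fold_le d (P : finLatticeType d) (x z : P) (s : seq P) :
  z \in s -> foldr Order.meet x s <= z.
Proof.
elim: s => //= a s IH; rewrite in_cons => /orP[/eqP->|/IH H].
  exact: leIl.
exact: le_trans (leIr _ _) H.
Qed.

Lemma fold_R d (P : finLatticeType d) (R : rel P) x (s : seq P) :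
  transfer_system R -> all (fun y => R y x) s -> R (foldr Order.meet x s) x.
Proof.
case=> refl _ tr le rest.
elim: s => [|a s IH] /=; first by move=> _; exact: (refl x).
move=> /andP[Ra /IH Rs].
have H := rest _ _ _ Ra (le _ _ Rs).
exact: tr H Rs.
Qed.

Lemma chi_spec d (P : finLatticeType d) (R : rel P) x :
  transfer_system R -> R (chi R x) x /\ (forall z, R z x -> chi R x <= z).
Proof.
move=> TR.
set s := [seq y <- enum P | R y x].
have Rm : R (foldr Order.meet x s) x.
  by apply: fold_R => //; apply/allP => y; rewrite mem_filter => /andP[].
have Lm : forall z, R z x -> foldr Order.meet x s <= z.
  by move=> z Rz; apply: fold_le; rewrite mem_filter Rz mem_enum.
by rewrite (@chi_eq _ _ R x _ Rm Lm).
Qed.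

Theorem lemma2p11 (d : Order.disp_t) (P : finLatticeType d) (R R' : rel P) :
  transfer_system R -> transfer_system R' ->
  chi R =1 chi R' ->
  chi (tr_meet R R') =1 chi R /\ chi (tr_meet R R') =1 chi R'.
Proof.
move=> TR TR' E.
have H : chi (tr_meet R R') =1 chi R.
  move=> x; have [R1 L1] := @chi_spec _ _ R x TR; have [R2 _] := @chi_spec _ _ R' x TR'.
  apply: chi_eq; first by rewrite /tr_meet R1 E R2.
  by move=> z /andP[Rz _]; exact: L1.
by split=> // x; rewrite H E.
Qed.
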